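(* For all integers $n\ge0$, $\overline{bt}(9n+6)\equiv 0\pmod 3$.
   Context: For $|q|<1$ and a positive integer $k$ let $f_k:=\prod_{m=1}^\infty(1-q^{mk})$. The function $\overline{bt}(n)$ is defined by $\sum_{n\ge0}\overline{bt}(n)q^n=\frac{f_4^3}{f_1^6f_2^3}$. *)

(* Defs.v *)
From mathcomp Require Import all_boot all_order all_algebra.
Set Implicit Arguments. Unset Strict Implicit. Unset Printing Implicit Defensive.
Import GRing.Theory.
Local Open Scope ring_scope.

(* Truncation of f_k = prod_{m>=1} (1 - q^{mk}) to the factors m <= N.
   For k >= 1 this agrees with f_k in all coefficients of degree <= N. *)
Definition fk (k N : nat) : {poly int} :=
  \prod_(1 <= m < N.+1) (1 - 'X^(m * k)).

(* Truncation of 1/f_k = prod_{m>=1} sum_{j>=0} q^{mkj} (geometric series),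
   keeping m <= N and j <= N; for k >= 1 it agrees with 1/f_k in all
   coefficients of degree <= N. *)
Definition inv_fk (k N : nat) : {poly int} :=
  \prod_(1 <= m < N.+1) \sum_(0 <= j < N.+1) 'X^(m * k * j).

(* bt-bar(n) = coefficient of q^n in f_4^3 / (f_1^6 f_2^3). *)
Definition btbar (n : nat) : int :=
  ((fk 4 n) ^+ 3 * (inv_fk 1 n) ^+ 6 * (inv_fk 2 n) ^+ 3)`_n.

(* Main.v *)
Require Import Defs.
From mathcomp Require Import all_boot all_order all_algebra.
From mathcomp Require Import ring lra zify.
Import GRing.Theory.
Local Open Scope ring_scope.


Definition cg (K : nat) (p q : {poly int}) :=
  forall i, (i < K)%N -> (3 %| (p - q)`_i)%Z.

Lemma cg_refl K p : cg K p p.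
Proof. by move=> i _; rewrite subrr coef0 dvdz0. Qed.

Lemma cg_sym K p q : cg K p q -> cg K q p.
Proof. by move=> h i /h; rewrite -opprB coefN rpredN. Qed.

Lemma cg_trans K p q r : cg K p q -> cg K q r -> cg K p r.
Proof.
move=> h1 h2 i hi; have := rpredD (h1 i hi) (h2 i hi).
by rewrite -coefD addrA subrK.
Qed.

Lemma cg_add K p q p' q' : cg K p q -> cg K p' q' -> cg K (p + p') (q + q').
Proof.
move=> h1 h2 i hi; have := rpredD (h1 i hi) (h2 i hi).
rewrite -coefD; suff -> : p - q + (p' - q') = p + p' - (q + q') by [].
by rewrite opprD addrACA.
Qed.

Lemma cg_opp K p q : cg K p q -> cg K (- p) (- q).
Proof. by move=> h i /h; rewrite -opprD coefN rpredN. Qed.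

Lemma cg_mull K r p q : cg K p q -> cg K (r * p) (r * q).
Proof.
move=> h i hi; rewrite -mulrBr coefM; apply: rpred_sum => j _.
apply: dvdz_mull; apply: h; apply: leq_ltn_trans hi; exact: leq_subr.
Qed.

Lemma cg_mul K p q p' q' : cg K p q -> cg K p' q' -> cg K (p * p') (q * q').
Proof.
move=> h1 h2; apply: (@cg_trans _ _ (p * q')); first exact: cg_mull.
rewrite (mulrC p) (mulrC q); exact: cg_mull.
Qed.

Lemma cg_exp K p q n : cg K p q -> cg K (p ^+ n) (q ^+ n).
Proof.
move=> h; elim: n => [|n IH]; first exact: cg_refl.
rewrite !exprS; exact: cg_mul.
Qed.

Lemma cg_prod K (I : Type) (r : seq I) (P : pred I) (F G : I -> {poly int}) :
  (forall i, P i -> cg K (F i) (G i)) ->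
  cg K (\prod_(i <- r | P i) F i) (\prod_(i <- r | P i) G i).
Proof.
move=> h; apply: (big_ind2 (cg K)); first exact: cg_refl.
  by move=> *; apply: cg_mul.
exact: h.
Qed.

Lemma cg_sum K (I : Type) (r : seq I) (P : pred I) (F G : I -> {poly int}) :
  (forall i, P i -> cg K (F i) (G i)) ->
  cg K (\sum_(i <- r | P i) F i) (\sum_(i <- r | P i) G i).
Proof.
move=> h; apply: (big_ind2 (cg K)); first exact: cg_refl.
  by move=> *; apply: cg_add.
exact: h.
Qed.

Lemma cg_le K K' p q : (K' <= K)%N -> cg K p q -> cg K' p q.
Proof. by move=> hK h i hi; apply: h; apply: leq_trans hK. Qed.

Lemma cg_3 K p r : cg K (p + r *+ 3) p.
Proof.
move=> i _; rewrite (addrC p) addrK coefMn.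
by apply/dvdzP; exists (r`_i); rewrite mulr_natr.
Qed.

Lemma cg_Xr K M p q r : (K <= M)%N -> p = q + 'X^M * r -> cg K p q.
Proof.
move=> hK -> i hi; rewrite (addrC q) addrK coefXnM.
by rewrite (leq_trans hi hK) dvdz0.
Qed.

Lemma cg_Xcancel K E p q : cg (K + E) ('X^E * p) ('X^E * q) -> cg K p q.
Proof.
move=> h i hi; have := h (i + E)%N; rewrite ltn_add2r => /(_ hi).
by rewrite -mulrBr coefXnM ltnNge leq_addl /= addnK.
Qed.

Lemma cg_Xmul K E p q : cg K p q -> cg K ('X^E * p) ('X^E * q).
Proof. exact: cg_mull. Qed.

Lemma cube_add K (a b : {poly int}) : cg K ((a + b) ^+ 3) (a ^+ 3 + b ^+ 3).
Proof.
have -> : (a + b) ^+ 3 = a ^+ 3 + b ^+ 3 + (a ^+ 2 * b + a * b ^+ 2) *+ 3 by ring.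
exact: cg_3.
Qed.

Lemma cube_sum K (I : Type) (r : seq I) (F : I -> {poly int}) :
  cg K ((\sum_(i <- r) F i) ^+ 3) (\sum_(i <- r) F i ^+ 3).
Proof.
elim: r => [|x r IH]; first by rewrite !big_nil expr0n; exact: cg_refl.
rewrite !big_cons; apply: cg_trans (cube_add _ _ _) _.
apply: cg_add; [exact: cg_refl | exact: IH].
Qed.


Fixpoint qbin {R : pzRingType} (q : R) (m k : nat) : R :=
  match m, k with
  | _, 0 => 1
  | 0, _.+1 => 0
  | m'.+1, k'.+1 => q ^+ k'.+1 * qbin q m' k'.+1 + qbin q m' k'
  end.

Lemma qbin_small {R : pzRingType} (q : R) m k : (m < k)%N -> qbin q m k = 0.
Proof.
elim: m k => [|m IH] [|k] //= hk.
by rewrite !IH ?mulr0 ?addr0 // ltnW.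
Qed.

Lemma qbin_id {R : pzRingType} (q : R) m : qbin q m m = 1.
Proof. by elim: m => //= m ->; rewrite qbin_small // mulr0 add0r. Qed.

Lemma qbin0 {R : pzRingType} (q : R) m : qbin q m 0 = 1.
Proof. by case: m. Qed.

Lemma qbinS {R : pzRingType} (q : R) m k :
  qbin q m.+1 k.+1 = q ^+ k.+1 * qbin q m k.+1 + qbin q m k.
Proof. by []. Qed.

Arguments qbin : simpl never.

Lemma rothe (R : comPzRingType) (q x y : R) m :
  \prod_(i < m) (x + y * q ^+ i) =
  \sum_(k < m.+1) qbin q m k * q ^+ 'C(k, 2) * y ^+ k * x ^+ (m - k).
Proof.
elim: m y => [|m IH] y.
  by rewrite big_ord0 big_ord_recl big_ord0 /= !expr0 !mulr1 addr0.
rewrite big_ord_recl /= expr0 mulr1.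
under eq_bigr do rewrite /bump /= add1n exprS mulrA.
rewrite IH [RHS]big_ord_recl qbin0 !expr0 !mulr1 mul1r subn0.
under [X in _ = _ + X]eq_bigr do rewrite lift0 subSS qbinS.
rewrite mulrDl.
have Hy : y * (\sum_(k < m.+1) qbin q m k * q ^+ 'C(k, 2) * (y * q) ^+ k * x ^+ (m - k))
  = \sum_(i < m.+1) qbin q m i * q ^+ 'C(i.+1, 2) * y ^+ i.+1 * x ^+ (m - i).
  rewrite mulr_sumr; apply: eq_bigr => k _.
  rewrite binS bin1 exprD exprMn exprS; ring.
have Hx : x * (\sum_(k < m.+1) qbin q m k * q ^+ 'C(k, 2) * (y * q) ^+ k * x ^+ (m - k))
  = x ^+ m.+1 + \sum_(i < m.+1) q ^+ i.+1 * qbin q m i.+1 * q ^+ 'C(i.+1, 2) * y ^+ i.+1 * x ^+ (m - i).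
  rewrite [X in _ = _ + X]big_ord_recr /= qbin_small // mulr0 !mul0r addr0.
  rewrite mulr_sumr big_ord_recl /= qbin0 !expr0 subn0 !mulr1 mul1r -exprS.
  congr (_ + _); apply: eq_bigr => k _.
  rewrite (_ : bump 0 k = k.+1) // binS bin1 exprD exprMn exprS.
  have hk : (m - k = (m - k.+1).+1)%N by have := ltn_ord k; lia.
  rewrite hk [x ^+ (_.+1)]exprS; ring.
rewrite Hy Hx -addrA; congr (_ + _).
rewrite -big_split /=; apply: eq_bigr => k _; rewrite mulrDl; ring.
Qed.

Lemma qbin_lim (R : comPzRingType) (q : R) b a :
  exists r, \prod_(1 <= m < a.+1) (1 - q ^+ m) * qbin q (a + b) a = 1 + q ^+ b.+1 * r.
Proof.
elim: b a => [|b IHb] a.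
  rewrite addn0 qbin_id mulr1.
  elim: a => [|a [r Hr]]; first by exists 0; rewrite big_geq // mulr0 addr0.
  rewrite big_nat_recr //= Hr.
  exists (r - q ^+ a - q ^+ a.+1 * r); rewrite !exprS; ring.
elim: a => [|a [r1 Hr1]].
  by exists 0; rewrite big_geq // add0n qbin0 mulr0 addr0 mulr1.
have [r2 Hr2] := IHb a.+1.
rewrite addSn -addnS in Hr2.
rewrite addSn qbinS mulrDr mulrCA Hr2.
rewrite big_nat_recr //= -mulrA (mulrC (1 - _)) mulrA Hr1.
exists (q ^+ a * r2 + r1 - q ^+ a.+1 * r1); rewrite !exprS; ring.
Qed.


Definition ek (L k : nat) : nat :=
  (if L <= k then (k - L) * (2 * (k - L) - 1) else (L - k) * (2 * (L - k) + 1))%N.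

Definition EE (L : nat) : nat := (4 * 'C(L, 2) + (4 * L - 1) * L)%N.

Lemma c2 k : (2 * 'C(k, 2) = k * (k - 1))%N.
Proof.
elim: k => [|k IH] //; rewrite binS bin1 mulnDr IH; nia.
Qed.

Lemma tk_eq L k : (0 < L)%N -> (k <= 2 * L)%N ->
  (4 * 'C(k, 2) + (4 * L - 1) * (2 * L - k) = EE L + ek L k)%N.
Proof.
move=> hL hk; rewrite /EE /ek.
have h1 : (4 * 'C(k, 2) = 2 * (k * (k - 1)))%N by rewrite -c2; lia.
have h2 : (4 * 'C(L, 2) = 2 * (L * (L - 1)))%N by rewrite -c2; lia.
rewrite h1 h2; clear h1 h2.
case: leqP => hLk.
  have [j hkj] : exists j, k = (L + j)%N by exists (k - L)%N; lia.
  subst k.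
  rewrite addKn.
  have hj : (j <= L)%N by lia.
  have -> : (2 * L - (L + j) = L - j)%N by lia.
  clear hLk hk; case: j hj => [|j] hj; first by rewrite !addn0 subn0; nia.
  have [m hm] : exists m, L = (j.+1 + m)%N by exists (L - j.+1)%N; lia.
  subst L; rewrite addKn.
  have e1 : (j.+1 + m + j.+1 - 1 = j.+1 + m + j)%N by lia.
  have e2 : (4 * (j.+1 + m) - 1 = 4 * (j + m) + 3)%N by lia.
  have e3 : (j.+1 + m - 1 = j + m)%N by lia.
  have e4 : (2 * j.+1 - 1 = 2 * j + 1)%N by lia.
  rewrite e1 e2 e3 e4; ring.
have [j hkj] : exists j, L = (k + j.+1)%N by exists (L - k.+1)%N; lia.
subst L.
have e2 : (4 * (k + j.+1) - 1 = 4 * (k + j) + 3)%N by lia.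
have e3 : (k + j.+1 - 1 = k + j)%N by lia.
have e5 : (2 * (k + j.+1) - k = k + 2 * j.+1)%N by lia.
rewrite addKn e2 e3 e5.
case: k {hk hLk hL e2 e3 e5} => [|k]; first by rewrite /=; ring.
have e6 : (k.+1 - 1 = k)%N by lia.
rewrite e6; ring.
Qed.

Lemma ek_ge L k : (L - k <= ek L k)%N /\ (k - L <= ek L k)%N.
Proof.
have g1 j : (j <= j * (2 * j - 1))%N.
  case: j => [|j] //; rewrite (_ : (2 * j.+1 - 1 = 2 * j + 1)%N); [nia | lia].
have g2 j : (j <= j * (2 * j + 1))%N by nia.
rewrite /ek; case: (leqP L k) => h; split.
- rewrite (_ : (L - k = 0)%N) //; lia.
- exact: g1.
- exact: g2.
- rewrite (_ : (k - L = 0)%N) //; lia.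
Qed.

Lemma ek_mod L k c : ek L k <> (3 * c + 2)%N.
Proof.
rewrite /ek; case: leqP => _; set j := (_ - _)%N;
have [a [r [-> hr]]] : exists a r, j = (3 * a + r)%N /\ (r < 3)%N
  by exists (j %/ 3)%N, (j %% 3)%N; rewrite {1}(divn_eq j 3) mulnC ltn_mod.
all: case: r hr => [|[|[|r]]] // _.
all: try (case: a => [|a]; [lia|]).
all: nia.
Qed.


Lemma coef_sign m (p : {poly int}) i : ((-1) ^+ m * p)`_i = (-1) ^+ m * p`_i.
Proof.
elim: m => [|m IH]; first by rewrite !expr0 !mul1r.
by rewrite !exprS !mulN1r mulNr coefN IH mulNr.
Qed.

Lemma cg_prod_nat K lo hi (F G : nat -> {poly int}) :
  (forall m, (lo <= m < hi)%N -> cg K (F m) (G m)) ->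
  cg K (\prod_(lo <= m < hi) F m) (\prod_(lo <= m < hi) G m).
Proof. by move=> h; rewrite big_nat [X in cg _ _ X]big_nat; apply: cg_prod. Qed.

Lemma fk_trunc d N a K : (N <= a)%N -> (K <= N.+1 * d)%N ->
  cg K (fk d a) (fk d N).
Proof.
move=> hNa hK; rewrite /fk (@big_cat_nat _ _ _ N.+1) //=.
rewrite -[X in cg _ _ X]mulr1; apply: cg_mull.
apply: (@cg_trans _ _ (\prod_(N.+1 <= m < a.+1) (1 : {poly int}))); last first.
  by rewrite big1 //; exact: cg_refl.
apply: cg_prod_nat => m /andP [hm _].
apply: (@cg_Xr _ (m * d) _ _ (-1)); last by rewrite mulrN1.
by apply: (leq_trans hK); rewrite leq_mul2r hm orbT.
Qed.

Lemma fk_inv d N K : (0 < d)%N -> (K <= N.+1)%N -> cg K (fk d N * inv_fk d N) 1.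
Proof.
move=> hd hK; rewrite /fk /inv_fk -big_split /=.
apply: (@cg_trans _ _ (\prod_(1 <= m < N.+1) (1 : {poly int}))); last first.
  by rewrite big1 //; exact: cg_refl.
apply: cg_prod_nat => m /andP [hm _].
have -> : (1 - 'X^(m * d)) * \sum_(0 <= j < N.+1) 'X^(m * d * j)
    = 1 - ('X^(m * d)) ^+ N.+1 :> {poly int}.
  rewrite big_mkord; under eq_bigr do rewrite exprM.
  by rewrite -opprB mulNr -subrX1 opprB.
apply: (@cg_Xr _ (m * d * N.+1) _ _ (-1)); last by rewrite -exprM mulrN1.
apply: (leq_trans hK); rewrite leq_pmull // muln_gt0; apply/andP; split => //.
Qed.

Lemma cube1 K a : cg K ((1 - 'X^a) ^+ 3) (1 - 'X^(a * 3)).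
Proof.
apply: cg_trans (cube_add _ _ _) _.
have -> : (1 : {poly int}) ^+ 3 + (- 'X^a) ^+ 3 = 1 - 'X^a ^+ 3 by ring.
by rewrite -exprM; exact: cg_refl.
Qed.

Lemma fk_frob K N : cg K (fk 1 N ^+ 9) (fk 9 N).
Proof.
rewrite /fk -prodrXl; apply: cg_prod_nat => m _.
rewrite muln1 (_ : 9%N = (3 * 3)%N) // exprM.
apply: cg_trans (@cg_exp K _ _ 3 (cube1 K m)) _.
apply: cg_trans (cube1 K _) _.
rewrite -mulnA; exact: cg_refl.
Qed.

Definition OO (L : nat) : {poly int} :=
  \prod_(i < L) ((1 - 'X^(4 * i + 1)) * (1 - 'X^(4 * i + 3))).

Lemma big_shift (F : nat -> {poly int}) a c :
  \prod_(a <= m < a + c) F m = \prod_(j < c) F (a + j)%N.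
Proof.
elim: c => [|c IH]; first by rewrite addn0 big_geq // big_ord0.
by rewrite addnS big_nat_recr /= ?leq_addr // IH big_ord_recr.
Qed.

Lemma group_prod c L (F : nat -> {poly int}) :
  \prod_(1 <= m < (c * L).+1) F m = \prod_(i < L) \prod_(j < c) F (c * i + j).+1.
Proof.
elim: L => [|L IH]; first by rewrite muln0 big_geq // big_ord0.
rewrite big_ord_recr /= -IH (@big_cat_nat _ _ _ (c * L).+1) //=; last first.
  by rewrite ltnS leq_mul2l leqnSn orbT.
congr (_ * _).
rewrite (_ : (c * L.+1).+1 = (c * L).+1 + c)%N; last by rewrite mulnS; lia.
by rewrite big_shift; apply: eq_bigr => j _; rewrite addSn.
Qed.

Lemma fk1_split L : fk 1 (4 * L) = OO L * fk 2 (2 * L).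
Proof.
rewrite /fk /OO !group_prod -big_split /=; apply: eq_bigr => i _.
rewrite !big_ord_recr !big_ord0 /= !muln1.
rewrite (_ : ((4 * i + 0).+1 = 4 * i + 1)%N); last by lia.
rewrite (_ : ((4 * i + 2).+1 = 4 * i + 3)%N); last by lia.
rewrite (_ : ((2 * i + 0).+1 * 2 = (4 * i + 1).+1)%N); last by lia.
rewrite (_ : ((2 * i + 1).+1 * 2 = (4 * i + 3).+1)%N); last by lia.
ring.
Qed.

Lemma rothe_lhs L : (0 < L)%N ->
  \prod_(i < 2 * L) (- 'X^(4 * L - 1) + 1 * ('X^4 : {poly int}) ^+ i)
  = (-1) ^+ L * 'X^(EE L) * OO L.
Proof.
move=> hL.
rewrite (_ : (2 * L = L + L)%N); last by lia.
rewrite big_split_ord /=.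
have h1 : \prod_(i < L) (- 'X^(4 * L - 1) + 1 * ('X^4 : {poly int}) ^+ (lshift L i))
    = 'X^(4 * 'C(L, 2)) * \prod_(i < L) (1 - 'X^(4 * i + 3)).
  rewrite [X in _ = _ * X](reindex_inj rev_ord_inj) /=.
  have -> : 'X^(4 * 'C(L, 2)) = \prod_(i < L) ('X^(4 * i) : {poly int}).
    rewrite prodrXr -big_distrr /= -bin2_sum big_mkord //.
  rewrite -big_split /=; apply: eq_bigr => i _.
  rewrite mul1r -exprM mulrBr mulr1 -exprD.
  have -> : (4 * i + (4 * (L - i.+1) + 3) = 4 * L - 1)%N by have := ltn_ord i; lia.
  by rewrite addrC.
have h2 : \prod_(i < L) (- 'X^(4 * L - 1) + 1 * ('X^4 : {poly int}) ^+ (rshift L i))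
    = (-1) ^+ L * 'X^((4 * L - 1) * L) * \prod_(i < L) (1 - 'X^(4 * i + 1)).
  have -> : (-1) ^+ L * 'X^((4 * L - 1) * L) = \prod_(i < L) (- 'X^(4 * L - 1) : {poly int}).
    by rewrite prodr_const card_ord [RHS]exprNn -exprM.
  rewrite -big_split /=; apply: eq_bigr => i _.
  rewrite mul1r -exprM mulrBr mulr1 mulNr opprK -exprD.
  have -> : (4 * L - 1 + (4 * i + 1) = 4 * (L + i))%N by lia.
  by [].
rewrite h1 h2 /EE exprD /OO big_split /=; ring.
Qed.

Definition Psi (L : nat) : {poly int} :=
  \sum_(k < (2 * L).+1) (-1) ^+ (2 * L - k) * 'X^(ek L k).

Lemma rothe_spec L : (0 < L)%N ->
  (-1) ^+ L * 'X^(EE L) * OO L = 'X^(EE L) *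
  \sum_(k < (2 * L).+1) (-1) ^+ (2 * L - k) * 'X^(ek L k) * qbin ('X^4) (2 * L) k.
Proof.
move=> hL; rewrite -rothe_lhs // rothe mulr_sumr; apply: eq_bigr => k _.
rewrite expr1n mulr1 (exprNn ('X^(4 * L - 1))) -!exprM.
have h : 'X^(4 * 'C(k, 2)) * 'X^((4 * L - 1) * (2 * L - k))
    = 'X^(EE L) * 'X^(ek L k) :> {poly int}.
  by rewrite -!exprD tk_eq // -ltnS.
transitivity ((-1) ^+ (2 * L - k) * qbin ('X^4 : {poly int}) (2 * L) k *
  ('X^(4 * 'C(k, 2)) * 'X^((4 * L - 1) * (2 * L - k)))).
  set a := 'X^(4 * 'C(k, 2)); set b := 'X^(_ * _); set s := (-1) ^+ _.
  set c := qbin _ _ _; ring.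
rewrite h; set a := 'X^(EE L); set b := 'X^(ek L k); set s := (-1) ^+ _.
set c := qbin _ _ _; ring.
Qed.

Lemma psi_id N :
  cg N.+1 ((-1) ^+ (2 * N.+1) * OO (2 * N.+1) * fk 4 N) (Psi (2 * N.+1)).
Proof.
set K := N.+1; set L := (2 * K)%N.
have hL : (0 < L)%N by rewrite /L /K; lia.
have E1 : (-1) ^+ L * OO L * fk 4 N = \sum_(k < (2 * L).+1)
    (-1) ^+ (2 * L - k) * 'X^(ek L k) * (qbin ('X^4) (2 * L) k * fk 4 N).
  apply: (@mulfI _ ('X^(EE L))); first by rewrite expf_neq0 // polyX_eq0.
  transitivity ((-1) ^+ L * 'X^(EE L) * OO L * fk 4 N); first by ring.
  rewrite rothe_spec // -mulrA mulr_suml; congr (_ * _); apply: eq_bigr => k _; ring.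
rewrite E1 /Psi; apply: cg_sum => k _.
case: (leqP K (ek L k)) => hk.
  apply: (@cg_Xr _ (ek L k) _ _ ((-1) ^+ (2 * L - k) * (qbin ('X^4) (2 * L) k * fk 4 N - 1))) => //.
  ring.
rewrite -[X in cg _ _ X]mulr1; apply: cg_mull.
have [g1 g2] := ek_ge L k.
have hk1 : (N <= k)%N by rewrite /L /K in g1 hk *; lia.
have hk2 : (k <= 2 * L)%N by rewrite -ltnS.
have [r Hr] := qbin_lim _ ('X^4 : {poly int}) (2 * L - k) k.
rewrite subnKC // in Hr.
have Efk : \prod_(1 <= m < k.+1) (1 - ('X^4 : {poly int}) ^+ m) = fk 4 k.
  by rewrite /fk; apply: eq_bigr => m _; rewrite -exprM mulnC.
rewrite Efk in Hr.
apply: (@cg_trans _ _ (qbin ('X^4) (2 * L) k * fk 4 k)).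
  by apply: cg_mull; apply: cg_sym; apply: fk_trunc => //; lia.
rewrite mulrC Hr; apply: (@cg_Xr _ (4 * (2 * L - k).+1) _ _ r).
  by rewrite /L /K in g2 hk *; lia.
by rewrite exprM.
Qed.

Definition Psi3 (L : nat) : {poly int} :=
  \sum_(k < (2 * L).+1) (-1) ^+ (2 * L - k) * 'X^(ek L k * 3).

Lemma sign3 m : ((-1) ^+ m : {poly int}) ^+ 3 = (-1) ^+ m.
Proof. by rewrite -exprM -[RHS]signr_odd -[LHS]signr_odd oddM andbT. Qed.

Lemma psi_cube K L : cg K (Psi L ^+ 3) (Psi3 L).
Proof.
rewrite /Psi; apply: cg_trans (@cube_sum K _ _ _) _.
apply: cg_sum => k _; rewrite exprMn sign3 -exprM; exact: cg_refl.
Qed.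

Lemma fk1_cg N : cg N.+1 (fk 1 N) (OO (2 * N.+1) * fk 2 N).
Proof.
apply: (@cg_trans _ _ (fk 1 (4 * (2 * N.+1)))).
  by apply: cg_sym; apply: fk_trunc; lia.
rewrite fk1_split; apply: cg_mull; apply: fk_trunc; lia.
Qed.

Lemma main_cg N :
  cg N.+1 ((-1) ^+ (2 * N.+1) * (fk 4 N ^+ 3 * inv_fk 1 N ^+ 6 * inv_fk 2 N ^+ 3))
     (Psi3 (2 * N.+1) * inv_fk 9 N).
Proof.
set K := N.+1; set L := (2 * K)%N; set s := ((-1) ^+ L : {poly int}).
set F1 := fk 1 N; set F2 := fk 2 N; set F4 := fk 4 N; set F9 := fk 9 N.
set I1 := inv_fk 1 N; set I2 := inv_fk 2 N; set I9 := inv_fk 9 N.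
have hI1 : cg K (F1 * I1) 1 by apply: fk_inv.
have hI2 : cg K (F2 * I2) 1 by apply: fk_inv.
have hI9 : cg K (F9 * I9) 1 by apply: fk_inv.
set W := F4 ^+ 3 * I1 ^+ 6 * I2 ^+ 3.
apply: (@cg_trans _ _ (s * W * (F9 * I9))).
  by apply: cg_sym; rewrite -[X in cg _ _ X]mulr1; apply: cg_mull.
rewrite mulrA; apply: cg_mul; last exact: cg_refl.
apply: (@cg_trans _ _ (s * W * F1 ^+ 9)).
  by apply: cg_mull; apply: cg_sym; apply: fk_frob.
have -> : s * W * F1 ^+ 9 = s * (F4 * F1 * I2) ^+ 3 * (F1 * I1) ^+ 6.
  by rewrite /W; ring.
apply: (@cg_trans _ _ (s * (F4 * F1 * I2) ^+ 3 * 1 ^+ 6)).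
  by apply: cg_mull; apply: cg_exp.
rewrite expr1n mulr1.
apply: (@cg_trans _ _ (s * (F4 * OO L) ^+ 3)).
  apply: cg_mull; apply: cg_exp.
  apply: (@cg_trans _ _ (F4 * (OO L * F2) * I2)).
    by apply: cg_mul; [apply: cg_mull; apply: fk1_cg | apply: cg_refl].
  have -> : F4 * (OO L * F2) * I2 = F4 * OO L * (F2 * I2) by ring.
  by rewrite -[X in cg _ _ X]mulr1; apply: cg_mull.
have -> : s * (F4 * OO L) ^+ 3 = (s * OO L * F4) ^+ 3.
  by rewrite !exprMn /s sign3; ring.
apply: cg_trans (@cg_exp _ _ _ 3 (psi_id N)) _.
exact: psi_cube.
Qed.

Definition mult (d : nat) (p : {poly int}) := forall i, p`_i != 0 -> (d %| i)%N.

Lemma mult0 d : mult d 0.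
Proof. by move=> i; rewrite coef0 eqxx. Qed.

Lemma mult1 d : mult d 1.
Proof. by move=> i; rewrite coef1; case: (i =P 0%N) => [-> | _]; rewrite ?dvdn0 ?eqxx. Qed.

Lemma multX d e : (d %| e)%N -> mult d 'X^e.
Proof. by move=> he i; rewrite coefXn; case: (i =P e) => [-> | _]; rewrite ?eqxx. Qed.

Lemma mult_add d p q : mult d p -> mult d q -> mult d (p + q).
Proof.
move=> hp hq i; rewrite coefD.
case: (eqVneq p`_i 0) => [-> | /hp //]; rewrite add0r; exact: hq.
Qed.

Lemma mult_mul d p q : mult d p -> mult d q -> mult d (p * q).
Proof.
move=> hp hq i hpq; apply/negPn/negP => hi; move: hpq.
rewrite coefM big1 ?eqxx // => j _.
case: (eqVneq p`_j 0) => [-> | /hp hj]; first by rewrite mul0r.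
case: (eqVneq q`_(i - j) 0) => [-> | /hq hij]; first by rewrite mulr0.
exfalso; apply/negP: hi.
have := ltn_ord j; rewrite ltnS => hji.
by rewrite -(subnKC hji) dvdn_add.
Qed.

Lemma mult_inv9 N : mult 9 (inv_fk 9 N).
Proof.
rewrite /inv_fk; apply: (big_ind (mult 9)); [exact: mult1 | exact: mult_mul |].
move=> m _; apply: (big_ind (mult 9)); [exact: mult0 | exact: mult_add |].
by move=> j _; apply: multX; rewrite dvdn_mulr // dvdn_mull.
Qed.

Lemma psi3_supp L i : (Psi3 L)`_i != 0 ->
  exists k : 'I_(2 * L).+1, i = (ek L k * 3)%N.
Proof.
move=> h; case: (pickP (fun k : 'I_(2 * L).+1 => i == (ek L k * 3)%N)) => [k /eqP hk | hn].
  by exists k.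
move: h; rewrite /Psi3 coef_sum big1 ?eqxx // => k _.
by rewrite coef_sign coefXn hn mulr0.
Qed.

Lemma supp_zero L N n : (Psi3 L * inv_fk 9 N)`_(9 * n + 6) = 0.
Proof.
rewrite coefM big1 // => j _.
case: (eqVneq (Psi3 L)`_j 0) => [-> | /psi3_supp [k hk]]; first by rewrite mul0r.
case: (eqVneq (inv_fk 9 N)`_(9 * n + 6 - j) 0) => [-> | /mult_inv9 h9]; first by rewrite mulr0.
exfalso; have := ltn_ord j; rewrite ltnS => hj.
case/dvdnP: h9 => c hc.
apply: (@ek_mod L k (n - c)); rewrite hk in hj hc; lia.
Qed.

Local Close Scope ring_scope.

Theorem mainTheorem11 : forall n : nat, (3 %| btbar (9 * n + 6))%Z.
Proof.
move=> n; have h := main_cg (9 * n + 6) (9 * n + 6) (ltnSn _).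
rewrite coefB supp_zero subr0 coef_sign in h.
have := dvdz_mull ((-1) ^+ (2 * (9 * n + 6).+1))%R h.
by rewrite signrMK.
Qed.
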